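(* Let $K$ be a field, $n>0$, $B=K[x_1,\dots,x_n]$, and $\varphi:B\to B$ a $K$-algebra homomorphism. Let $d,r\in\mathbb{N}$ with $r>0$ and $h_1,\dots,h_r\in B_{\le d}$. Let $m>n+d$ be an integer and suppose there is no nontrivial relation $\varphi(b_1)h_1+\dots+\varphi(b_r)h_r=0$ with $b_1,\dots,b_r\in B_{\le m}$ not all zero. Then $m\,(r-\deg(\varphi)^n)<2^n\deg(\varphi)^{n-1}(n+d)$.
   Context: $\deg(\varphi)=\max\{\deg\varphi(x_1),\dots,\deg\varphi(x_n)\}$ with $\deg$ the total degree; $B_{\le d}$ is the $K$-subspace of polynomials of total degree $\le d$. *)

(* Defs.v *)
From HB Require Import structures.
From mathcomp Require Import all_boot all_order all_algebra.
From mathcomp Require Import mpoly.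
Set Implicit Arguments. Unset Strict Implicit. Unset Printing Implicit Defensive.
Import Order.TTheory GRing.Theory Num.Theory.
Local Open Scope ring_scope.

(* total degree of a multivariate polynomial; msize p = 1 + total degree
   (and msize 0 = 0), so deg 0 is taken to be 0 here *)
Definition tdeg (n : nat) (K : fieldType) (p : {mpoly K[n]}) : nat :=
  (msize p).-1.

Definition hom_deg (n : nat) (K : fieldType)
  (phi : {mpoly K[n]} -> {mpoly K[n]}) : nat :=
  \max_(i < n) tdeg (phi 'X_i).

Definition deg_le (n : nat) (K : fieldType) (d : nat) (p : {mpoly K[n]}) : Prop :=
  (msize p <= d.+1)%N.

(* Main.v *)
Set Warnings "-notation-overridden -ambiguous-paths -notation-incompatible-prefix".
Require Import Defs.
From HB Require Import structures.
From mathcomp Require Import all_boot all_order all_algebra.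
From mathcomp Require Import mpoly.
From mathcomp Require Import ring lra zify.
Import Order.TTheory GRing.Theory Num.Theory.
Local Open Scope ring_scope.


Lemma powbound (R : realFieldType) (D e : R) n : 1 <= D -> 0 <= e -> e <= 1 ->
  (D+e)^+n.+1 <= D^+n.+1 + (2^n.+1 - 1)%:R * D^+n * e.
Proof.
move=> D1 e0 e1; elim: n => [|n IH].
  by rewrite !expr1 expr0 /= mulr1 mul1r.
have X0 : 0 <= D^+n by rewrite exprn_ge0 // (le_trans ler01 D1).
have -> : (2 ^ n.+2 - 1)%:R = 2 * (2 ^ n.+1 - 1)%:R + 1 :> R.
  have hn : (2 ^ n.+2 - 1 = 2 * (2 ^ n.+1 - 1) + 1)%N.
    have : (0 < 2 ^ n.+1)%N by rewrite expn_gt0.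
    rewrite (expnS 2 n.+1); lia.
  by rewrite hn natrD natrM.
move: IH; set C := (2 ^ n.+1 - 1)%:R; set X := D ^+ n => IH.
have C0 : 0 <= C by rewrite ler0n.
rewrite exprS (exprS D n.+1) (exprS D n) -/X.
have h1 : (D + e) * (D + e) ^+ n.+1 <= (D + e) * (D * X + C * X * e).
  by rewrite (exprS D n) -/X in IH; apply: ler_wpM2l => //; lra.
apply: (le_trans h1).
have h2 : 0 <= C * X * e * (D - e) by rewrite !mulr_ge0 // subr_ge0 (le_trans e1 D1).
nra.
Qed.

Definition cb k n := 'C(k + n, n).

Lemma cbS k n : (n.+1 * cb k n.+1 = (k + n + 1) * cb k n)%N.
Proof. by rewrite /cb -mul_bin_diag addnS addn1. Qed.

Lemma cb_gt0 k n : (0 < cb k n)%N.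
Proof. by rewrite /cb bin_gt0 leq_addl. Qed.

Lemma ratio (D d m : nat) n : (1 <= D)%N -> (0 < m)%N ->
  (cb (D * m + d) n)%:R <= (cb m n)%:R * (D%:R + d%:R / m%:R)^+n :> rat.
Proof.
move=> D1 m0; set e : rat := d%:R / m%:R.
have mn0 : (m%:R : rat) != 0 by rewrite pnatr_eq0 -lt0n.
have me : m%:R * e = d%:R by rewrite /e mulrC divfK.
have e0 : 0 <= e by rewrite /e divr_ge0.
have D1' : 1 <= D%:R :> rat by rewrite ler1n.
clearbody e.
elim: n => [|n IH].
  by rewrite /cb !bin0 expr0 mulr1 lexx.
have key : (D * m + d + n + 1)%:R <= (m + n + 1)%:R * (D%:R + e) :> rat.
  rewrite !natrD natrM.
  have hDn : (n%:R:rat) <= D%:R * n%:R by rewrite ler_peMl // ler0n.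
  have hne : 0 <= (n%:R:rat) * e by rewrite mulr_ge0 // ler0n.
  have -> : ((m%:R + n%:R + 1%:R) * (D%:R + e) : rat) =
     D%:R * m%:R + D%:R * n%:R + D%:R + m%:R * e + n%:R * e + e by ring.
  rewrite me; lra.
have hn : 0 < (n.+1)%:R :> rat by rewrite ltr0n.
rewrite -(ler_pM2l hn) -natrM cbS natrM.
apply: (le_trans (ler_wpM2l _ IH)); first by rewrite ler0n.
have E : n.+1%:R * (cb m n.+1)%:R = (m+n+1)%:R * (cb m n)%:R :> rat by rewrite -!natrM cbS.
rewrite [X in _ <= X]mulrA E exprS.
have -> : (m + n + 1)%:R * (cb m n)%:R * ((D%:R + e) * (D%:R + e) ^+ n) =
   ((m + n + 1)%:R * (D%:R + e)) * ((cb m n)%:R * (D%:R + e) ^+ n) :> rat by ring.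
apply: ler_wpM2r => //.
by rewrite mulr_ge0 ?ler0n // exprn_ge0 // addr_ge0 // ler0n.
Qed.

Lemma cb_lt k n : (0 < n)%N -> (cb k n < cb k.+1 n)%N.
Proof.
case: n => // n _; rewrite /cb addSn binS.
have : (0 < 'C(k + n.+1, n))%N by rewrite bin_gt0; lia.
lia.
Qed.

Lemma cb_mono k j n : (0 < n)%N -> (cb k n < cb (k + j.+1) n)%N.
Proof.
move=> n0; elim: j => [|j IH]; first by rewrite addn1; exact: (cb_lt k n n0).
by apply: (ltn_trans IH); rewrite (addnS k j.+1); exact: (cb_lt _ n n0).
Qed.

Lemma arith n D d m r : (0 < n)%N -> (n + d < m)%N -> (0 < r)%N ->
  (r * cb m n <= cb (D * m + d) n)%N ->
  (m%:Z * (r%:Z - (D ^ n)%:Z) < (2 ^ n * D ^ n.-1 * (n + d))%:Z)%R.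
Proof.
move=> n0 hm r0 H.
case: D H => [|D'] H.
  exfalso; move: H; rewrite mul0n add0n.
  have [j hj] : exists j, m = (d + j.+1)%N by exists (m - d - 1)%N; lia.
  have := cb_mono d j n n0; rewrite -hj.
  have : (cb m n <= r * cb m n)%N by rewrite leq_pmull.
  lia.
set D := D'.+1 in H *.
have D1 : (1 <= D)%N by [].
have m0 : (0 < m)%N by lia.
have HR := ratio D d m n D1 m0.
have rle : (r%:R : rat) <= (D%:R + d%:R / m%:R) ^+ n.
  have c0 : 0 < (cb m n)%:R :> rat by rewrite ltr0n cb_gt0.
  rewrite -(ler_pM2l c0); apply: le_trans HR; rewrite mulrC -natrM ler_nat.
  exact: H.
case: n n0 hm rle {H HR} => // n' _ hm rle.
have e0 : 0 <= d%:R / m%:R :> rat by rewrite divr_ge0 ?ler0n.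
have mn0 : (m%:R : rat) != 0 by rewrite pnatr_eq0 -lt0n.
have e1 : d%:R / m%:R <= 1 :> rat.
  rewrite ler_pdivrMr ?ltr0n // mul1r ler_nat; lia.
have D1r : 1 <= D%:R :> rat by rewrite ler1n.
have := powbound rat (D%:R) (d%:R / m%:R) n' D1r e0 e1.
move=> pb; have h := le_trans rle pb.
have hm' : 0 <= m%:R :> rat by rewrite ler0n.
have := ler_wpM2l hm' h.
have E : m%:R * (d%:R / m%:R) = d%:R :> rat by rewrite mulrC divfK.
set C : rat := (2 ^ n'.+1 - 1)%:R; set e := d%:R / m%:R.
have -> : m%:R * (D%:R ^+ n'.+1 + C * D%:R ^+ n' * e) =
    m%:R * D%:R ^+ n'.+1 + C * D%:R ^+ n' * (m%:R * e) :> rat by ring.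
rewrite E /C -!natrX -!natrM -natrD ler_nat => H2 /=.
have hP : (1 <= 2 ^ n'.+1)%N by rewrite expn_gt0.
have hX : (1 <= D ^ n')%N by rewrite expn_gt0.
move: H2 hP hX; set P := (2 ^ n'.+1)%N; set X := (D ^ n')%N; set Y := (D ^ n'.+1)%N.
move=> H2 hP hX.
nia.
Qed.


Section Deg.
Variables (K : fieldType) (n : nat).
Implicit Types (p q : {mpoly K[n]}).

Lemma msum_le (I : Type) (r : seq I) (P : pred I) (F : I -> {mpoly K[n]}) k :
  (forall i, P i -> (msize (F i) <= k)%N) ->
  (msize (\sum_(i <- r | P i) F i) <= k)%N.
Proof.
move=> h; apply: (big_ind (fun p => (msize p <= k)%N)) => //.
- by rewrite msize0.
- by move=> x y hx hy; apply: leq_trans (msizeD_le _ _) _; rewrite geq_max hx hy.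
Qed.

Lemma msizeM_deg p q a b : (msize p <= a.+1)%N -> (msize q <= b.+1)%N ->
  (msize (p * q) <= (a + b).+1)%N.
Proof.
have [->|p0] := eqVneq p 0; first by rewrite mul0r msize0.
have [->|q0] := eqVneq q 0; first by rewrite mulr0 msize0.
rewrite msizeM_proper; last by rewrite mulf_neq0 // mleadc_eq0.
lia.
Qed.

Lemma msize_prod_deg (I : Type) (r : seq I) (F : I -> {mpoly K[n]}) (G : I -> nat) :
  (forall i, (msize (F i) <= (G i).+1)%N) ->
  (msize (\prod_(i <- r) F i) <= (\sum_(i <- r) G i).+1)%N.
Proof.
move=> h; elim: r => [|x r IH]; first by rewrite !big_nil msize1.
by rewrite !big_cons; apply: msizeM_deg.
Qed.

Lemma msize_exp_deg p a k : (msize p <= a.+1)%N -> (msize (p ^+ k) <= (a * k).+1)%N.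
Proof.
move=> h; elim: k => [|k IH]; first by rewrite expr0 msize1 muln0.
by rewrite exprS mulnS; apply: msizeM_deg.
Qed.

End Deg.

Section Phi.
Variables (K : fieldType) (n : nat) (phi : {lrmorphism {mpoly K[n]} -> {mpoly K[n]}}).

Lemma phiX_deg (i : 'I_n) : (msize (phi 'X_i) <= (hom_deg phi).+1)%N.
Proof.
rewrite /hom_deg /tdeg.
apply: leq_trans (leqSpred _) _; rewrite ltnS.
exact: (@leq_bigmax _ (fun i : 'I_n => (msize (phi 'X_i)).-1) i).
Qed.

Lemma phi_mono_deg (mm : 'X_{1..n}) :
  (msize (phi 'X_[mm]) <= (hom_deg phi * mdeg mm).+1)%N.
Proof.
rewrite mpolyXE_id rmorph_prod mdegE big_distrr /=.
apply: msize_prod_deg => i; rewrite rmorphXn.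
apply: msize_exp_deg; exact: phiX_deg.
Qed.

Lemma phi_deg p k : (msize p <= k.+1)%N -> (msize (phi p) <= (hom_deg phi * k).+1)%N.
Proof.
move=> hp; rewrite (mpolyE p) linear_sum big_seq /=; apply: msum_le => mm mm_in.
rewrite linearZ /=; apply: leq_trans (msizeZ_le _ _) _.
apply: leq_trans (phi_mono_deg mm) _; rewrite ltnS leq_mul2l.
have := msize_mdeg_lt mm_in; lia.
Qed.
End Phi.


Section Count.
Variable n : nat.

Definition dropm (M : 'X_{1..n.+1}) : 'X_{1..n} := [multinom M (lift ord_max i) | i < n].

Lemma mdeg_drop M : mdeg M = (mdeg (dropm M) + M ord_max)%N.
Proof.
rewrite !mdegE big_ord_recr /=; congr (_ + _)%N.
apply: eq_bigr => i _; rewrite mnmE; congr (M _); apply: ord_inj.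
by rewrite lift_max.
Qed.

Lemma drop_inj M1 M2 : mdeg M1 = mdeg M2 -> dropm M1 = dropm M2 -> M1 = M2.
Proof.
move=> hd hdr; have hm := mdeg_drop M1; rewrite hd mdeg_drop hdr in hm.
apply/mnmP => i; case: (unliftP ord_max i) => [j ->|->].
  by have := congr1 (fun M : 'X_{1..n} => M (j : 'I_n)) hdr; rewrite /= !mnmE.
lia.
Qed.

Lemma ext_exists (m : 'X_{1..n}) k : (mdeg m <= k)%N ->
  exists M : 'X_{1..n.+1}, mdeg M = k /\ dropm M = m.
Proof.
move=> hk.
pose M : 'X_{1..n.+1} := [multinom (match unlift ord_max i with Some j => m j | None => (k - mdeg m)%N end) | i < n.+1].
have hdr : dropm M = m by apply/mnmP => i; rewrite !mnmE liftK.
exists M; split => //.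
by rewrite mdeg_drop hdr mnmE unlift_none; lia.
Qed.

Definition Sk (k : nat) : {set 'X_{1..n.+1 < k.+1}} := [set M | mdeg (val M) == k].

Lemma card_Sk k : #|Sk k| = 'C(k + n, k).
Proof.
rewrite cardE -(size_map val) -(size_basis n k).
apply: perm_size; apply: uniq_perm.
- by rewrite map_inj_uniq ?enum_uniq //; exact: val_inj.
- exact: uniq_basis.
move=> M; rewrite -basis_cover; apply/mapP/idP.
  by case=> B; rewrite mem_enum inE => hB ->.
move=> hM; have hM' : (mdeg M < k.+1)%N by rewrite (eqP hM).
exists (BMultinom hM'); last by [].
by rewrite mem_enum inE.
Qed.

End Count.

Section Main.
Variables (K : fieldType) (n : nat).

Arguments dropm {n}. Arguments mdeg_drop {n}. Arguments drop_inj {n}. Arguments ext_exists {n}.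
Definition mon k (j : 'I_#|Sk n k|) : 'X_{1..n} := dropm (val (enum_val j)).

Lemma mon_deg k j : (mdeg (mon k j) <= k)%N.
Proof.
have := enum_valP j; rewrite inE => /eqP hk.
have := @mdeg_drop n (val (enum_val j)); rewrite hk /mon; lia.
Qed.

Lemma mon_inj k : injective (mon k).
Proof.
move=> j1 j2 h; apply: enum_val_inj; apply: val_inj; apply: drop_inj => //.
have := enum_valP j1; have := enum_valP j2; rewrite !inE => /eqP -> /eqP -> //.
Qed.

Lemma mon_surj k (mm : 'X_{1..n}) : (mdeg mm <= k)%N -> exists j, mon k j = mm.
Proof.
move=> hk; have [M [hM hdr]] := @ext_exists n mm k hk.
have hM' : (mdeg M < k.+1)%N by rewrite hM.
have hB : BMultinom hM' \in Sk n k by rewrite inE hM.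
exists (enum_rank_in hB (BMultinom hM')).
by rewrite /mon enum_rankK_in.
Qed.
End Main.
Arguments mon {n}. Arguments mon_deg {n}. Arguments mon_inj {n}. Arguments mon_surj {n}.

Lemma count_main (K : fieldType) (n : nat)
  (phi : {lrmorphism {mpoly K[n]} -> {mpoly K[n]}})
  (d r : nat) (h : 'I_r -> {mpoly K[n]})
  (hd : forall i, deg_le d (h i))
  (m : nat)
  (hrel : forall b : 'I_r -> {mpoly K[n]},
      (forall i, deg_le m (b i)) ->
      \sum_(i < r) phi (b i) * h i = 0 ->
      forall i, b i = 0) :
  (r * #|Sk n m| <= #|Sk n (hom_deg phi * m + d)|)%N.
Proof.
set D := hom_deg phi; set N := (D * m + d)%N.
pose ev (p : 'I_#|{: 'I_r * 'I_#|Sk n m|}|) : 'I_r * 'I_#|Sk n m| := enum_val p.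
set P := #|{: 'I_r * 'I_#|Sk n m|}| in ev *.
pose A : 'M[K]_(P, #|Sk n N|) :=
  \matrix_(p, j) (phi 'X_[mon m (ev p).2] * h (ev p).1)@_(mon N j).
have ker : forall u : 'rV[K]_P, u *m A = 0 -> u = 0.
  move=> u hu.
  pose b i := \sum_(p : 'I_P | (ev p).1 == i) u 0 p *: 'X_[mon m (ev p).2].
  have hb : forall i, deg_le m (b i).
    move=> i; rewrite /deg_le; apply: msum_le => p _.
    apply: leq_trans (msizeZ_le _ _) _; rewrite msizeX ltnS; exact: mon_deg.
  pose G p := u 0 p *: (phi 'X_[mon m (ev p).2] * h (ev p).1).
  have eqS : \sum_(i < r) phi (b i) * h i = \sum_p G p.
    rewrite (partition_big (fun p => (ev p).1) xpredT) //.
    apply: eq_bigr => i _; rewrite linear_sum mulr_suml.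
    apply: eq_bigr => p /eqP hp; rewrite linearZ /= -scalerAl /G hp //.
  have hG : (msize (\sum_p G p) <= N.+1)%N.
    apply: msum_le => p _; rewrite /G.
    apply: leq_trans (msizeZ_le _ _) _.
    rewrite /N; apply: msizeM_deg; last exact: hd.
    apply: leq_trans (@phi_mono_deg K n phi _) _; rewrite ltnS leq_mul2l.
    by rewrite mon_deg orbT.
  have S0 : \sum_p G p = 0.
    apply/mpolyP => mm; rewrite mcoeff0.
    case: (leqP (mdeg mm) N) => hmm.
      have [j <-] := mon_surj N mm hmm.
      have := congr1 (fun M : 'rV[K]_#|Sk n N| => M 0 j) hu; rewrite !mxE => <-.
      by rewrite raddf_sum; apply: eq_bigr => p _; rewrite /G /= mcoeffZ mxE.
    apply/eqP; rewrite mcoeff_eq0; apply: msize_mdeg_ge; lia.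
  have hb0 := hrel b hb (etrans eqS S0).
  apply/rowP => p; rewrite mxE.
  have := congr1 (mcoeff (mon m (ev p).2)) (hb0 (ev p).1).
  rewrite mcoeff0 /b raddf_sum (bigD1 p) //= big1.
    by rewrite mcoeffZ mcoeffX eqxx mulr1 addr0.
  move=> q /andP [hq hqp]; rewrite mcoeffZ mcoeffX.
  case: eqP => [heq|]; last by rewrite mulr0.
  exfalso; move/negP: hqp; apply; apply/eqP; apply: enum_val_inj.
  have h2 := mon_inj m _ _ heq.
  rewrite -/(ev q) -/(ev p); move: (ev q) (ev p) (eqP hq) h2 => [a1 a2] [b1 b2] /= -> -> //.
have kz : kermx A = 0.
  apply/row_matrixP => i; rewrite row0; apply: ker; by rewrite -row_mul mulmx_ker row0.
have := mxrank_ker A; rewrite kz mxrank0 => /esym/eqP; rewrite subn_eq0 => hle.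
have := leq_trans hle (rank_leq_col A).
by rewrite /P card_prod !card_ord.
Qed.

Lemma card_Sk_cb n k : #|Sk n k| = cb k n.
Proof. by rewrite card_Sk /cb -bin_sub ?leq_addr // addKn. Qed.

Theorem lemma4p1 (K : fieldType) (n : nat) (n_gt0 : (0 < n)%N)
  (phi : {lrmorphism {mpoly K[n]} -> {mpoly K[n]}})
  (d r : nat) (r_gt0 : (0 < r)%N) (h : 'I_r -> {mpoly K[n]})
  (hd : forall i, deg_le d (h i))
  (m : nat) (hm : (n + d < m)%N)
  (hrel : forall b : 'I_r -> {mpoly K[n]},
      (forall i, deg_le m (b i)) ->
      \sum_(i < r) phi (b i) * h i = 0 ->
      forall i, b i = 0) :
  (m%:Z * (r%:Z - (hom_deg phi ^ n)%:Z) <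
     (2 ^ n * hom_deg phi ^ n.-1 * (n + d))%:Z)%R.
Proof.
apply: arith => //.
have := @count_main K n phi d r h hd m hrel; by rewrite !card_Sk_cb.
Qed.
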